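(* Let $P_0$ be a probability distribution on $\mathbb{R}^{d_0}$ with compact support $S$, let $\epsilon>0$, and let $\mathcal{P}(P_0,\epsilon)=\{P : W_\infty(P_0,P)\le \epsilon\}$. Let $g:\mathbb{R}^{d_0}\to\mathbb{R}^{d}$ ($d<d_0$) be continuous with a continuous map $g^{-1}:\mathbb{R}^d\to\mathbb{R}^{d_0}$, and let $\ell(\bm\theta,\cdot):\mathbb{R}^{d_0}\to[0,M]$ be a continuous loss satisfying the on-manifold assumption $\ell(\bm\theta,\bm x)=\ell(\bm\theta,g^{-1}(g(\bm x)))$ for all $\bm x\in\mathbb{R}^{d_0}$. Define $$\epsilon_z=\sup_{\bm x\in S}\ \sup_{\|\bm\delta_x\|_\infty\le\epsilon}\|g(\bm x)-g(\bm x+\bm\delta_x)\|_\infty .$$ Then $$\sup_{P\in\mathcal{P}(P_0,\epsilon)}\mathbb{E}_{\bm x'\sim P}[\ell(\bm\theta,\bm x')]\ \le\ \mathbb{E}_{\bm x\sim P_0}\Big[\sup_{\|\bm\delta_z\|_\infty\le\epsilon_z}\ell\big(\bm\theta,g^{-1}(g(\bm x)+\bm\delta_z)\big)\Big].$$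
   Context: $W_\infty$ denotes the $\infty$-Wasserstein distance, $W_\infty(P,Q)=\inf_{\lambda\in\Lambda(P,Q)}\operatorname{ess\,sup}_{(x,y)\sim\lambda}\|x-y\|_\infty$, where $\Lambda(P,Q)$ is the set of couplings of $P$ and $Q$. The loss $\ell(\bm\theta,\bm x)=\mathbb{E}_{y\sim P_{y\mid\bm x}}[\mathcal{L}(\bm\theta,\bm x,y)]$ is the expected classification loss of a model with parameters $\bm\theta$ at input $\bm x$; $\bm\theta$ is fixed throughout. The map $g$ is a projection onto a lower-dimensional ''primary feature'' (latent) space and $g^{-1}$ a reconstruction map; the on-manifold assumption says reconstruction preserves the loss for all inputs, including those from distributions in $\mathcal{P}(P_0,\epsilon)$. *)

(* Defs.v *)
From HB Require Import structures.
From mathcomp Require Import all_boot all_order all_algebra.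
From mathcomp Require Import all_classical all_reals all_analysis ess_sup_inf.
Set Implicit Arguments. Unset Strict Implicit. Unset Printing Implicit Defensive.
Import Order.TTheory GRing.Theory Num.Theory.
Import numFieldNormedType.Exports.
Local Open Scope classical_set_scope.
Local Open Scope ring_scope.

(* R^n is modelled as row vectors 'rV[R]_n; their norm `|x| in
   MathComp-Analysis is the max-norm, i.e. the l_infinity norm.
   We equip 'rV[R]_n with its Borel sigma-algebra (generated by open sets). *)
Section borel_rV.
Variables (R : realType) (n : nat).
HB.instance Definition _ :=
  Measurable.copy 'rV[R]_n (g_sigma_algebraType (@open 'rV[R]_n)).
End borel_rV.

Section Winf.
Variables (R : realType) (n : nat).

Definition coupling (P Q : probability 'rV[R]_n R)
    (lam : probability ('rV[R]_n * 'rV[R]_n)%type R) : Prop :=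
  (forall A, measurable A -> lam (A `*` setT) = P A) /\
  (forall B, measurable B -> lam (setT `*` B) = Q B).

Definition W_inf (P Q : probability 'rV[R]_n R) : \bar R :=
  ereal_inf [set ess_sup lam (fun z => (`|z.1 - z.2|)%:E) | lam in coupling P Q].

(* support of a probability measure: points all of whose (open) balls
   have positive measure; this is the smallest closed set of full measure. *)
Definition prob_support (P : probability 'rV[R]_n R) : set 'rV[R]_n :=
  [set x | forall e : R, 0 < e -> (0 < P (ball x e))%E].

End Winf.

(* Main.v *)
Require Import Defs.
From HB Require Import structures.
From mathcomp Require Import all_boot all_order all_algebra.
From mathcomp Require Import all_classical all_reals all_analysis.
From mathcomp Require Import measurable_realfun ess_sup_inf.
Import Order.TTheory GRing.Theory Num.Theory.
Import numFieldNormedType.Exports.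
Local Open Scope classical_set_scope.
Local Open Scope ring_scope.

Section Helpers.
Variables (R : realType) (n : nat).

Lemma open_meas (A : set 'rV[R]_n) : open A -> measurable A.
Proof. by move=> oA; apply: sub_sigma_algebra. Qed.

Lemma cont_dist (c : 'rV[R]_n) : continuous (fun x : 'rV[R]_n => `|x - c|).
Proof.
move=> x; apply: (@continuous_comp _ _ _ (fun x => x - c) Num.norm).
  by apply: continuousB; [exact: cvg_id| exact: cst_continuous].
exact: (@norm_continuous _ _ (x - c)).
Qed.

Lemma cont_norm : continuous (fun x : 'rV[R]_n => `|x|).
Proof. by move=> x; apply: norm_continuous. Qed.

Lemma closed_distge (c : 'rV[R]_n) (a : R) : closed [set x | a <= `|x - c|].
Proof.
have := ((continuous_closedP _).1 (@cont_dist c) _) (@closed_ge _ a); exact.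
Qed.

Lemma closed_normle (a : R) : closed [set x : 'rV[R]_n | `|x| <= a].
Proof.
have := ((continuous_closedP _).1 cont_norm _) (@closed_le _ a); exact.
Qed.

Lemma compact_normle (a : R) : compact [set x : 'rV[R]_n | `|x| <= a].
Proof.
apply: bounded_closed_compact; last exact: closed_normle.
exists a; split; first exact: num_real.
by move=> M aM x /= xa; apply: le_trans xa (ltW aM).
Qed.

Lemma compact_negligible (P : probability 'rV[R]_n R) (C : set 'rV[R]_n) :
  compact C -> (forall x, C x -> exists2 e : R, 0 < e & P (ball x e) = 0%E) ->
  P.-negligible C.
Proof.
move=> cC hC.
pose F : set_system (set 'rV[R]_n) := fun Q =>
  exists N, P.-negligible N /\ forall U, N `<=` U -> Q U.
have FF : Filter F.
  constructor.
  - by exists set0; split => //; exact: negligible_set0.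
  - move=> Q1 Q2 [N1 [n1 h1]] [N2 [n2 h2]]; exists (N1 `|` N2); split.
      exact: negligibleU.
    by move=> U NU; split; [apply: h1|apply: h2]; apply: subset_trans NU;
      [exact: subsetUl|exact: subsetUr].
  - by move=> Q1 Q2 Q12 [N [nN hN]]; exists N; split => // U /hN; apply: Q12.
have : \forall U \near F, C `<=` U.
  apply: ((compact_near_coveringP C).1 cC _ F (fun U x => U x)) => x Cx.
  have [e e0 Pe] := hC x Cx.
  exists (ball x e, [set U | ball x e `<=` U]); first split => /=.
  - exact: nbhsx_ballx.
  - exists (ball x e); split => //.
    apply/negligibleP => //; apply: open_meas; exact: ball_open.
  by move=> [x' U] [/= bx' bU]; apply: bU.
move=> [N [nN hN]]; apply: negligibleS nN; exact: hN.
Qed.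

Lemma supp_null (P : probability 'rV[R]_n R) :
  compact (prob_support P) -> P (~` prob_support P) = 0%E.
Proof.
set S := prob_support P => cS.
have clS : closed S := compact_closed (@norm_hausdorff _ _) cS.
have oSc : open (~` S) by rewrite openC.
apply/(negligibleP P (open_meas _ oSc)).
pose C k := [set x : 'rV[R]_n | `|x| <= k%:R] `&`
  \bigcap_(s in S) [set x | (k.+1%:R)^-1 <= `|x - s|].
apply: (negligibleS _ (@negligible_bigcup _ _ _ P C _)).
  move=> x Sx; have := oSc x Sx; move=> /nbhs_ballP [r /= r0 hr].
  have r10 : 0 < r^-1 by rewrite invr_gt0.
  have hb : `|x| + r^-1 < (Num.bound (`|x| + r^-1))%:R.
    by apply: archi_boundP; rewrite addr_ge0 // ltW.
  set k := Num.bound (`|x| + r^-1) in hb *.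
  exists k => //; split.
    by apply: le_trans (ltW hb); rewrite lerDl ltW.
  move=> s Ss /=; rewrite leNgt; apply/negP => xs.
  apply: (hr s) => //; rewrite -ball_normE /=.
  apply: lt_trans xs _.
  rewrite -[r]invrK ltf_pV2 ?posrE ?ltr0Sn ?invr_gt0 //.
  apply: (@le_lt_trans _ _ (`|x| + r^-1)); first by rewrite lerDr.
  by apply: lt_trans hb _; rewrite ltr_nat.
move=> k; apply: compact_negligible.
  apply: bounded_closed_compact.
    exists k%:R; split; first exact: num_real.
    by move=> M kM x [/= xk _]; exact: le_trans xk (ltW kM).
  apply: closedI; first exact: closed_normle.
  by apply: closed_bigI => s _; exact: closed_distge.
move=> x [xk xS].
have nSx : ~ S x.
  move=> Sx; have := xS x Sx; rewrite /= subrr normr0 leNgt invr_gt0 ltr0Sn.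
  by [].
move: nSx; rewrite /S /prob_support /= => /existsNP [e] /not_implyP [e0].
move=> /negP; rewrite -leNgt => Pe.
by exists e => //; apply/eqP; rewrite eq_le Pe measure_ge0.
Qed.



Lemma lsc_meas (f : 'rV[R]_n -> \bar R) :
  (forall r : R, open [set x | (r%:E < f x)%E]) -> measurable_fun setT f.
Proof.
move=> hf; apply: (measurability _ (ErealGenOInfty.measurableE R)).
move=> _ [_ [r ->] <-]; rewrite setTI.
apply: open_meas; have := hf r; congr open; apply/seteqP; split => x /=;
  by rewrite in_itv /= andbT.
Qed.

Lemma cont_meas (f : 'rV[R]_n -> R) : continuous f ->
  measurable_fun setT (fun x => (f x)%:E).
Proof.
move=> cf; apply: lsc_meas => r.
have -> : [set x | (r%:E < (f x)%:E)%E] = f @^-1` [set y | r < y].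
  by apply/seteqP; split => x /=; rewrite lte_fin.
by apply: open_comp => // x _; apply: cf; apply: open_gt.
Qed.


Lemma UC (K : set 'rV[R]_n) (f : 'rV[R]_n -> R) : compact K -> continuous f ->
  forall γ : R, 0 < γ -> exists2 η : R, 0 < η &
    forall x, K x -> forall y, `|x - y| < η -> `|f x - f y| < γ.
Proof.
move=> cK cf γ γ0.
have : \forall η \near (0:R), K `<=` (fun x => forall y, `|x - y| < η -> `|f x - f y| < γ).
  apply: ((compact_near_coveringP K).1 cK R (nbhs (0:R))
     (fun η x => forall y, `|x - y| < η -> `|f x - f y| < γ))=> x Kx.
  have /cvgrPdist_lt /(_ (γ / 2)) := cf x.
  rewrite divr_gt0 // => /(_ isT) /nbhs_ballP [r /= r0 Hr].
  exists (ball x (r / 2), ball (0:R) (r / 2)); first split => /=.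
  - by apply: nbhsx_ballx; rewrite divr_gt0.
  - by apply: nbhsx_ballx; rewrite divr_gt0.
  move=> [x' η] [/= xx' η0] y x'y.
  rewrite -ball_normE /= in xx' η0.
  have hx' : `|f x - f x'| < γ / 2 by apply: Hr; rewrite -ball_normE /=; 
    apply: lt_trans xx' _; rewrite ltr_pdivrMr // ltr_pMr // ltr1n.
  have hy : `|f x - f y| < γ / 2.
    apply: Hr; rewrite -ball_normE /=.
    rewrite (_ : x - y = (x - x') + (x' - y)); last by rewrite addrA subrK.
    apply: le_lt_trans (ler_normD _ _) _.
    rewrite [r]splitr ltrD //.
    apply: lt_le_trans x'y _.
    apply: le_trans (ltW η0); rewrite distrC subr0; exact: ler_norm.
  rewrite (_ : f x' - f y = (f x - f y) - (f x - f x')); last first.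
    by rewrite opprB [RHS]addrC addrA subrK.
  apply: le_lt_trans (ler_normB _ _) _.
  by rewrite [γ]splitr ltrD.
move=> /nbhs_ballP [e /= e0 He].
exists (e / 2); first by rewrite divr_gt0.
apply: He; rewrite -ball_normE /= sub0r normrN gtr0_norm ?divr_gt0 //.
by rewrite ltr_pdivrMr // ltr_pMr // ltr1n.
Qed.

Section E.

Local Open Scope ereal_scope.
Lemma coupling_snd (P Q : probability 'rV[R]_n R) lam (f : 'rV[R]_n -> \bar R) :
  coupling P Q lam -> measurable_fun setT f -> (forall x, 0 <= f x) ->
  \int[Q]_x f x = \int[lam]_z f z.2.
Proof.
move=> [_ c2] mf f0.
transitivity (\int[pushforward lam snd]_x f x).
  apply: eq_measure_integral => A mA _; transitivity (lam (setT `*` A)); first by rewrite c2.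
  change (lam (setT `*` A) = lam (snd @^-1` A)).
  by congr (lam _); apply/seteqP; split => [[a b]|[a b]] //= [] //.
rewrite (ge0_integral_pushforward (@measurable_snd _ _ _ _) _ _ mf) //.
Qed.

Lemma coupling_fst (P Q : probability 'rV[R]_n R) lam (f : 'rV[R]_n -> \bar R) :
  coupling P Q lam -> measurable_fun setT f -> (forall x, 0 <= f x) ->
  \int[P]_x f x = \int[lam]_z f z.1.
Proof.
move=> [c1 _] mf f0.
transitivity (\int[pushforward lam fst]_x f x).
  apply: eq_measure_integral => A mA _; transitivity (lam (A `*` setT)); first by rewrite c1.
  change (lam (A `*` setT) = lam (fst @^-1` A)).
  by congr (lam _); apply/seteqP; split => [[a b]|[a b]] //= [] //.
rewrite (ge0_integral_pushforward (@measurable_fst _ _ _ _) _ _ mf) //.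
Qed.
End E.
End Helpers.

Theorem lemma1 (R : realType) (d0 d : nat) (P0 : probability 'rV[R]_d0 R)
  (S : set 'rV[R]_d0) (eps : R) (g : 'rV[R]_d0 -> 'rV[R]_d)
  (ginv : 'rV[R]_d -> 'rV[R]_d0) (ell : 'rV[R]_d0 -> R) (M : R) :
  (d < d0)%N ->
  prob_support P0 = S -> compact S ->
  0 < eps ->
  continuous g -> continuous ginv ->
  continuous ell -> (forall x, 0 <= ell x <= M) ->
  (forall x, ell x = ell (ginv (g x))) ->
  let eps_z : R :=
    sup [set r : R | exists2 x, S x &
           exists2 dx : 'rV[R]_d0, `|dx| <= eps & r = `|g x - g (x + dx)|] in
  (ereal_sup [set (\int[P]_x (ell x)%:E)%E
             | P in [set P : probability 'rV[R]_d0 R | (W_inf P0 P <= eps%:E)%E]]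
   <= \int[P0]_x ereal_sup [set (ell (ginv (g x + dz)%R))%:E
                           | dz in [set dz : 'rV[R]_d | (`|dz| <= eps_z)%R]])%E.
Proof.
move=> _ suppS cS eps0 cg cginv cell ellM onman; cbv zeta.
set eps_z := sup _.
have [r0 hr0] : exists r0 : R, forall x, S x -> `|x| <= r0.
  have [M' [_ HM]] := compact_bounded cS.
  by exists (M' + 1) => x Sx; apply: (HM (M' + 1)) => //; rewrite ltrDl.
pose K := [set y : 'rV[R]_d0 | `|y| <= r0 + eps + 1].
have cK : compact K := compact_normle _ _ _.
have Kin : forall x dx, S x -> `|dx| <= eps + 1 -> K (x + dx).
  move=> x dx Sx hdx; rewrite /K /=; apply: le_trans (ler_normD _ _) _.
  by rewrite -addrA lerD // hr0.
have [B hB] : exists B : R, forall y, K y -> `|g y| <= B.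
  have cgK : compact (g @` K).
    apply: continuous_compact => //; exact: continuous_subspaceT.
  have [M' [_ HM]] := compact_bounded cgK.
  exists (M' + 1) => y Ky; apply: (HM (M' + 1)); first by rewrite ltrDl.
  by exists y.
have hE : forall x dx, S x -> `|dx| <= eps -> `|g x - g (x + dx)| <= eps_z.
  move=> x dx Sx hdx; apply: sup_upper_bound; last by exists x => //; exists dx.
  split; first by exists `|g x - g (x + dx)|; exists x => //; exists dx.
  exists (B + B) => _ [x' Sx' [dx' hdx' ->]].
  apply: le_trans (ler_normB _ _) _; apply: lerD; apply: hB.
    by rewrite -[x']addr0; apply: Kin => //; rewrite normr0 addr_ge0 // ltW.
  by apply: Kin => //; apply: le_trans hdx' _; rewrite lerDl.
have ez0 : 0 <= eps_z.
  have [[x Sx]|S0] := pselect (exists x, S x).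
    apply: le_trans (hE x 0 Sx _); [exact: normr_ge0 | by rewrite normr0 ltW].
  rewrite /eps_z (_ : [set r | _] = set0) ?sup0 //.
  by apply/seteqP; split => // r [x Sx]; exfalso; apply: S0; exists x.
pose F0 := fun x => ereal_sup [set (ell (ginv (g x + dz)))%:E
                              | dz in [set dz : 'rV[R]_d | `|dz| <= eps_z]].
set LHS := ereal_sup _.
change (LHS <= \int[P0]_x F0 x)%E.
have F0ge : forall x, ((ell x)%:E <= F0 x)%E.
  move=> x; apply: ereal_sup_ubound; exists 0; first by rewrite /= normr0.
  by rewrite addr0 -onman.
have F00 : forall x, (0 <= F0 x)%E.
  by move=> x; apply: le_trans (F0ge x); rewrite lee_fin; case/andP: (ellM x).
have cF : forall dz, continuous (fun x => ell (ginv (g x + dz))).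
  move=> dz x.
  apply: (@continuous_comp _ _ _ (fun x => ginv (g x + dz)) ell); last exact: cell.
  apply: (@continuous_comp _ _ _ (fun x => g x + dz) ginv); last exact: cginv.
  apply: continuousD; [exact: cg | exact: cst_continuous].
have mF0 : measurable_fun setT F0.
  apply: lsc_meas => r.
  have -> : [set x | (r%:E < F0 x)%E] =
      \bigcup_(dz in [set dz : 'rV[R]_d | `|dz| <= eps_z])
         ((fun x => ell (ginv (g x + dz))) @^-1` [set y | r < y]).
    apply/seteqP; split => x /=.
      by move=> /ereal_sup_gt [_ [dz hdz <-]]; rewrite lte_fin => h; exists dz.
    move=> [dz hdz h].
    apply: (@lt_le_trans _ _ (ell (ginv (g x + dz)))%:E); first by rewrite lte_fin.
    by apply: ereal_sup_ubound; exists dz.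
  apply: bigcup_open => dz _.
  by apply: open_comp => // x _; apply: cF; apply: open_gt.
have key : forall γ : R, 0 < γ -> exists2 η : R, 0 < η &
    forall x y, S x -> `|y - x| <= eps + η -> ((ell y)%:E <= F0 x + γ%:E)%E.
  move=> γ γ0; have [η1 η10 hU] := UC _ _ _ _ cK cell _ γ0.
  exists (η1 / 2); first by rewrite divr_gt0.
  move=> x y Sx hxy.
  set η := η1 / 2 in hxy.
  have η0 : 0 < η by rewrite divr_gt0.
  have epsη : 0 < eps + η by rewrite addr_gt0.
  pose c := eps / (eps + η).
  have c0 : 0 <= c by rewrite divr_ge0 // ltW.
  have c1 : c <= 1 by rewrite ler_pdivrMr // mul1r lerDl ltW.
  pose dx := c *: (y - x).
  have hdx : `|dx| <= eps.
    rewrite normrZ ger0_norm //.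
    apply: le_trans (ler_wpM2l c0 hxy) _.
    by rewrite /c divfK // gt_eqF.
  have Ka : K (x + dx) by apply: Kin => //; apply: le_trans hdx _; rewrite lerDl.
  have hay : `|(x + dx) - y| < η1.
    have -> : x + dx - y = (1 - c) *: (x - y).
      by rewrite scalerBl scale1r -scalerN opprB /dx addrAC.
    rewrite normrZ ger0_norm ?subr_ge0 //.
    apply: (@le_lt_trans _ _ η).
      rewrite distrC; apply: le_trans (ler_wpM2l _ hxy) _; first by rewrite subr_ge0.
      by rewrite mulrBl mul1r divfK ?gt_eqF // addrC addKr.
    by rewrite /η ltr_pdivrMr // ltr_pMr // ltr1n.
  have := hU _ Ka y hay; rewrite ltr_distlC => /andP [_ h].
  apply: (@le_trans _ _ ((ell (x + dx))%:E + γ%:E)%E).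
    by rewrite -EFinD lee_fin ltW.
  apply: leeD2r; rewrite onman; apply: ereal_sup_ubound.
  exists (g (x + dx) - g x); last by rewrite addrC subrK.
  by rewrite /= distrC; apply: hE.
have clS : closed S := compact_closed (@norm_hausdorff _ _) cS.
have mSc : measurable (~` S) by apply: open_meas; rewrite openC.
have P0Sc : P0 (~` S) = 0%E by rewrite -suppS; apply: supp_null; rewrite suppS.
have mell : measurable_fun setT (fun x => (ell x)%:E) := cont_meas _ _ _ cell.
have bound : forall P : probability 'rV[R]_d0 R, (W_inf P0 P <= eps%:E)%E ->
    forall γ : R, 0 < γ ->
    (\int[P]_x (ell x)%:E <= \int[P0]_x F0 x + γ%:E)%E.
  move=> P WP γ γ0; have [η η0 hk] := key γ γ0.
  have : (W_inf P0 P < (eps + η)%:E)%E.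
    by apply: le_lt_trans WP _; rewrite lte_fin ltrDl.
  move=> /ereal_inf_lt [_ [lam clam <-]] hlam.
  have /ess_supP ae1 := ltW hlam.
  have ae2 : \forall z \ae lam, S z.1.
    exists (~` S `*` setT); split.
    - exact: measurableX.
    - by rewrite clam.1.
    - by move=> [a b] /= nS; split.
  rewrite (coupling_snd _ _ _ _ _ _ clam mell) //; last first.
    by move=> x; rewrite lee_fin; case/andP: (ellM x).
  rewrite (coupling_fst _ _ _ _ _ _ clam mF0 F00).
  have -> : (γ%:E = \int[lam]_z (cst γ%:E) z)%E.
    rewrite integral_cst //.
    first [ by rewrite [X in (_ * X)%E]probability_setT mule1
          | by rewrite (@probability_setT _ _ _ lam) mule1
          | by have := @probability_setT _ _ _ lam; move=> /= ->; rewrite mule1 ].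
  rewrite -ge0_integralD //; last first.
  - by move=> z _; rewrite lee_fin ltW.
  - exact: measurableT_comp mF0 measurable_fst.
  apply: ae_ge0_le_integral => //.
  - by move=> z _; rewrite lee_fin; case/andP: (ellM z.2).
  - exact: measurableT_comp mell measurable_snd.
  - by move=> z _; rewrite adde_ge0 // lee_fin ltW.
  - apply: emeasurable_funD; last exact: measurable_cst.
    exact: measurableT_comp mF0 measurable_fst.
  apply: filterS2 ae1 ae2 => z h1 h2 _.
  by apply: hk => //; rewrite distrC -lee_fin.
apply: ge_ereal_sup => _ [P WP <-].
by apply/lee_addgt0Pr => γ γ0; exact: bound.
Qed.
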